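(* Let $X$ be a complete metric space, $f : X \to X$ a continuous map and $x \in X$. Then the following are equivalent: (i) The map $f{\uparrow}_x : \mathbb{N} \to X$, $n \mapsto f^n(x)$, can be extended to a continuous map $\widehat{f{\uparrow}_x} : \widehat{\mathbb{N}} \to X$. (ii) For every $s \in \widehat{\mathbb{Z}}$ and every sequence of positive integers $(n_i)_{i \in \mathbb{N}}$ with $n_i \to +\infty$ in $\mathbb{R}$ and $\widehat{n_i} \to s$ in $\widehat{\mathbb{Z}}$ as $i \to \infty$, the limit $\lim_{i \to \infty} f^{n_i}(x)$ exists in $X$ and depends only on $s$.
   Context: $\mathbb{N} = \{1,2,3,\dots\}$, $f^n$ is the $n$-th iterate of $f$, $\widehat{\mathbb{Z}} = \varprojlim_n \mathbb{Z}/n\mathbb{Z}$, and $\widehat{\cdot}:\mathbb{N} \to \widehat{\mathbb{Z}}$ is the natural embedding. $\widehat{\mathbb{N}}$ is the profinite completion of $(\mathbb{N},+)$: the projective limit (with projective limit topology, each term discrete) of the finite semigroups $\mathbb{Z}_{m,n}$ with underlying set $\{1,\dots,m-1\} \sqcup \mathbb{Z}/n\mathbb{Z}$ and quotient maps $\pi_{m,n}:\mathbb{N} \to \mathbb{Z}_{m,n}$ ($a \mapsto a$ if $a<m$, $a \mapsto a \bmod n$ if $a\ge m$). As a set $\widehat{\mathbb{N}} = \mathbb{N} \sqcup \widehat{\mathbb{Z}}$, $\mathbb{N}$ embeds via $n \mapsto (\pi_{m,n}(n))$, and a sequence of positive integers $(n_i)$ converges to $s \in \widehat{\mathbb{Z}}$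 in $\widehat{\mathbb{N}}$ iff $n_i \to \infty$ in $\mathbb{R}$ and $\widehat{n_i} \to s$ in $\widehat{\mathbb{Z}}$. *)

(* Defs.v *)
From HB Require Import structures.
From mathcomp Require Import all_boot all_order all_algebra.
From mathcomp Require Import all_classical all_reals all_analysis.

Set Implicit Arguments.
Unset Strict Implicit.
Unset Printing Implicit Defensive.

Import Order.TTheory GRing.Theory Num.Theory.
Local Open Scope classical_set_scope.

(* Profinite integers  Zhat = lim_n Z/nZ  (n >= 1).                          *)
(* An element is a compatible family (a k)_k where a k is the residue in     *)
(* Z/(k+1)Z, represented by a natural number < k+1; compatibility: for       *)
(* (d+1) | (m+1), a m mod (d+1) = a d.                                       *)
Definition zhat_compat (a : nat -> nat) : Prop :=
  (forall k, a k < k.+1) /\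
  (forall d m, d.+1 %| m.+1 -> a m %% d.+1 = a d).

Definition zhat_set := {a : nat -> nat | zhat_compat a}.
HB.instance Definition _ := gen_eqMixin zhat_set.
HB.instance Definition _ := gen_choiceMixin zhat_set.

Definition zhat_val (s : zhat_set) : {ptws nat -> nat} := proj1_sig s.

(* Projective limit topology = initial topology w.r.t. all projections to the
   discrete Z/(k+1)Z, i.e. induced by the product of discrete spaces. *)
Definition Zhat := initial_topology zhat_val.

Lemma zhat_of_nat_compat (n : nat) : zhat_compat (fun k => n %% k.+1).
Proof. by split=> [k|d m dm]; [rewrite ltn_mod | rewrite modn_dvdm]. Qed.

Definition zhat_of_nat (n : nat) : Zhat :=
  exist _ (fun k => n %% k.+1) (zhat_of_nat_compat n).

(* Nhat = N |_| Zhat, with N = {1,2,3,...}.                                  *)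
(* CONVENTION: [nh_nat k] denotes the positive integer k.+1.                 *)
Inductive nhat_set := nh_nat of nat | nh_inf of Zhat.
HB.instance Definition _ := gen_eqMixin nhat_set.
HB.instance Definition _ := gen_choiceMixin nhat_set.

(* The quotient map pi_{m,n} : Nhat -> Z_{m,n}, for m = i.+1, n = j.+1.
   Z_{m,n} = {1,..,m-1} |_| Z/nZ is encoded injectively in nat:
   a in {1,..,m-1} |-> a,   residue r in Z/nZ |-> m + r. *)
Definition pi_mn (ij : nat * nat) (p : nhat_set) : nat :=
  let m := ij.1.+1 in let n := ij.2.+1 in
  match p with
  | nh_nat k => if k.+1 < m then k.+1 else m + k.+1 %% n
  | nh_inf s => m + proj1_sig s ij.2
  end.

Definition nhat_proj (p : nhat_set) : {ptws (nat * nat) -> nat} :=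
  fun ij => pi_mn ij p.

Definition Nhat := initial_topology nhat_proj.

(* Main.v *)
Require Import Defs.
From HB Require Import structures.
From mathcomp Require Import all_boot all_order all_algebra.
From mathcomp Require Import all_classical all_reals all_analysis.
From mathcomp Require Import zify.
Import Order.TTheory GRing.Theory Num.Theory.
Local Open Scope classical_set_scope.
Local Open Scope ring_scope.

Lemma initial_cvg_to {S : choiceType} {T : topologicalType} (g : S -> T)
  (G : set_system S) (p : S) :
  Filter G -> g @ G --> g p -> G --> (p : initial_topology g).
Proof.
move=> FG h A; rewrite (@nbhsE (initial_topology g)) => -[B [[C oC <-] Cp] BA].
apply: (filterS BA); apply: h; exact: open_nbhs_nbhs.
Qed.

Lemma coord_nbhs (ij : nat * nat) (p : Nhat) :
  nbhs p [set q : Nhat | pi_mn ij q = pi_mn ij p].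
Proof.
have hc : (fun q : Nhat => nhat_proj q ij) @ p --> nhat_proj p ij.
  apply: (cvg_comp (nhat_proj : Nhat -> _) (proj ij)).
    exact: initial_continuous.
  exact: (@proj_continuous _ (fun _ : nat * nat => nat)).
exact: hc (discrete_set1 _).
Qed.

Lemma zhat_coord (G : set_system nat) (t : Zhat) (u : nat -> nat) :
  Filter G -> (forall b, \forall K \near G, (u K %% b.+1)%N = proj1_sig t b) ->
  zhat_of_nat (u K) @[K --> G] --> t.
Proof.
move=> FG h; apply: initial_cvg_to.
apply/pointwise_cvgP => b.
apply/discrete_cvg; rewrite /=.
exact: h b.
Qed.

Lemma zhat_coord_inv (G : set_system nat) (t : Zhat) (u : nat -> nat) b :
  Filter G -> zhat_of_nat (u K) @[K --> G] --> t ->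
  \forall K \near G, (u K %% b.+1)%N = proj1_sig t b.
Proof.
move=> FG hs.
have h := cvg_comp _ _ hs (@initial_continuous _ _ zhat_val t).
have h' := cvg_comp _ _ h (@proj_continuous _ (fun _ : nat => nat) b _).
by move/discrete_cvg: h'; apply.
Qed.

Lemma nhat_cvg (R : realType) (u : nat -> nat) (s : Zhat) :
  ((u i)%:R : R) @[i --> \oo] --> +oo ->
  zhat_of_nat (u i) @[i --> \oo] --> s ->
  (nh_nat (u i).-1 : Nhat) @[i --> \oo] --> (nh_inf s : Nhat).
Proof.
move=> hu hs; apply: initial_cvg_to; apply/pointwise_cvgP => -[a b].
apply/discrete_cvg => /=.
have h1 : \forall i \near \oo, (a < u i)%N.
  by apply: filterS (cvgry_ge hu (a.+1%:R)) => i; rewrite ler_nat.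
have h2 : \forall K \near \oo, (u K %% b.+1)%N = sval s b by exact: zhat_coord_inv.
suff: \forall i \near \oo, pi_mn (a,b) (nh_nat (u i).-1) = pi_mn (a,b) (nh_inf s) by [].
near=> i; rewrite /pi_mn /=.
have ai : (a < u i)%N by near: i.
rewrite prednK; last by apply: leq_ltn_trans ai.
rewrite ltnNge ai /=; congr (_ + _)%N; by near: i.
Unshelve. all: end_near.
Qed.

Lemma zhat_approx (t : Zhat) : exists w : nat -> nat,
  (forall K, (K < w K)%N) /\
  (forall K j, (j < K)%N -> (w K %% j.+1)%N = sval t j).
Proof.
exists (fun K => sval t (K`!.-1) + K`! * K.+1)%N; split.
  move=> K; have := fact_gt0 K; nia.
move=> K j jK.
have d : (j.+1 %| K`!)%N by apply: dvdn_fact; lia.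
rewrite -modnDm (eqP (dvdn_mulr K.+1 d)) addn0 modn_mod.
apply: (proj2 (proj2_sig t)).
by rewrite prednK ?fact_gt0.
Qed.

Lemma nat_div (R : realType) (u : nat -> nat) :
  (forall K, (K <= u K)%N) -> ((u K)%:R : R) @[K --> \oo] --> +oo.
Proof.
move=> h; apply: (ger_cvgy _ cvgr_idn); apply: nearW => K.
by rewrite ler_nat.
Qed.

Lemma zhat_lim (t : Zhat) (u : nat -> nat) :
  (forall K j, (j < K)%N -> (u K %% j.+1)%N = sval t j) ->
  zhat_of_nat (u K) @[K --> \oo] --> t.
Proof.
move=> h; apply: zhat_coord => b.
by apply: filterS (nbhs_infty_ge b.+1) => K; apply: h.
Qed.

Arguments nat_div {R u}.
Arguments zhat_lim {t u}.

Theorem corollary2p3 (R : realType) (X : completePseudoMetricType R)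
    (X_hausdorff : hausdorff_space X)
    (f : X -> X) (f_cont : continuous f) (x : X) :
  (exists F : Nhat -> X, continuous F /\
     forall k : nat, F (nh_nat k) = iter k.+1 f x)
  <->
  (forall s : Zhat, exists l : X,
     forall u : nat -> nat,
       (forall i, (0 < u i)%N) ->
       ((u i)%:R : R) @[i --> \oo] --> +oo%R ->
       zhat_of_nat (u i) @[i --> \oo] --> s ->
       iter (u i) f x @[i --> \oo] --> l).
Proof.
split.
  move=> [F [Fc FE]] s; exists (F (nh_inf s)) => u upos hu hs.
  have -> : (fun i => iter (u i) f x) = F \o (fun i => nh_nat (u i).-1).
    by apply: funext => i /=; rewrite FE prednK.
  apply: cvg_comp; last exact: Fc.
  exact: (@nhat_cvg R u s hu hs).
move=> H.
have [L HL] := choice H.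
pose F (p : Nhat) : X := match p with nh_nat k => iter k.+1 f x | nh_inf s => L s end.
exists F; split => //.
have approx : forall (q : Nhat) N e, 0 < e -> exists v, (0 < v)%N /\
    (forall j, (j < N)%N -> pi_mn (N, j) (nh_nat v.-1) = pi_mn (N, j) q) /\
    ball (F q) e (iter v f x).
  move=> [k|t] N e e0.
    by exists k.+1; split => //; split => //; exact: ballxx.
  have [w [hw1 hw2]] := zhat_approx t.
  have cv := HL t w (fun K => leq_ltn_trans (leq0n K) (hw1 K))
    (nat_div (fun K => ltnW (hw1 K))) (zhat_lim hw2).
  have h1 : \forall K \near \oo, ball (L t) e (iter (w K) f x) := cv _ (nbhsx_ballx _ _ e0).
  have [N0 _ HN0] := filterI h1 (nbhs_infty_ge N).
  have [hb hN] := HN0 (maxn N0 N) (leq_maxl _ _).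
  exists (w (maxn N0 N)); split; first exact: leq_ltn_trans (leq0n _) (hw1 _).
  split => // j jN; rewrite /pi_mn /= prednK; last exact: leq_ltn_trans (leq0n _) (hw1 _).
  have wN := hw1 (maxn N0 N).
  rewrite ifN; last by rewrite -leqNgt; apply: leq_trans wN.
  by rewrite hw2 //; apply: leq_trans hN.
move=> p A hA; apply: contrapT => hnot.
have [e e0 eA] : exists2 e, 0 < e & ball (F p) e `<=` A by apply/nbhs_ballP.
have hB : forall N, exists q : Nhat,
    (forall j, (j < N)%N -> pi_mn (N, j) q = pi_mn (N, j) p) /\ ~ A (F q).
  move=> N; apply: contrapT => hN; apply: hnot.
  have : \forall q \near p, forall j : 'I_N, pi_mn (N, val j) q = pi_mn (N, val j) p.
    exact: (@filter_forall Nhat ('I_N : finType) (fun (j : 'I_N) (q : Nhat) => pi_mn (N, val j) q = pi_mn (N, val j) p) (nbhs p) _ (fun j => coord_nbhs (N, val j) p)).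
  move=> hall; apply: (@filterS _ _ (nbhs_filter p) _ _ _ hall) => q hq; apply: contrapT => nA; apply: hN; exists q; split => //.
  by move=> j jN; apply: (hq (Ordinal jN)).
case: p hA hnot eA hB => [k|s] _ hnot eA hB.
  have [q [hq nA]] := hB k.+1.
  have := hq 0%N isT.
  case: q hq nA => [k'|t] _ nA; rewrite /pi_mn /= ltnSn.
    case: ifP => [_ [ek]|_]; last lia.
    by apply: nA; rewrite ek; apply: eA; exact: ballxx.
  lia.
have e20 : 0 < e / 2 by rewrite divr_gt0.
have hv : forall N, exists v, (N < v)%N /\
    (forall j, (j < N)%N -> (v %% j.+1)%N = sval s j) /\
    ~ ball (L s) (e / 2) (iter v f x).
  move=> N; have [q [hq nA]] := hB N.
  have [v [v0 [hag hball]]] := approx q N _ e20.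
  have hag' : forall j, (j < N)%N -> pi_mn (N, j) (nh_nat v.-1) = (N.+1 + sval s j)%N.
    by move=> j jN; rewrite hag // hq.
  have Nv : (N < v)%N.
    case: N hq hag hag' => [|N] hq hag hag' //.
    have := hag' 0%N isT; rewrite /pi_mn /= prednK //.
    case: ifP => [_|]; first lia.
    by move/negbT; rewrite -leqNgt.
  exists v; split => //; split.
    move=> j jN; have := hag' j jN; rewrite /pi_mn /= prednK // ifN; first lia.
    by rewrite -leqNgt.
  move=> b; apply: nA; apply: eA.
  rewrite [e]splitr; exact: ball_triangle b (ball_sym hball).
have [V hV] := choice hv.
have cv := HL s V (fun K => leq_ltn_trans (leq0n K) (proj1 (hV K)))
    (nat_div (fun K => ltnW (proj1 (hV K)))) (zhat_lim (fun K => proj1 (proj2 (hV K)))).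
have h1 : \forall K \near \oo, ball (L s) (e / 2) (iter (V K) f x) := cv _ (nbhsx_ballx _ _ e20).
have [N0 _ HN0] := h1.
exact: (proj2 (proj2 (hV N0))) (HN0 N0 (leqnn _)).
Qed.
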